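(* Let $X\subset\Gamma$ be finite and such that $\mathbb N\ni n\mapsto|\underline X_n\setminus\underline X_{n-1}|$ is non-increasing. Let $R\in\mathbb N$, $\rho=\lfloor R/2\rfloor$, and $\Lambda\subset\Gamma$ finite with $\overline X^R\subset\Lambda$. Define $K(t):=-\sum_{Z\subset\Lambda:\ Z\cap X\ne\emptyset,\ Z\cap(\Lambda\setminus X)\neq\emptyset}\Psi(Z,t)$. Then $$\sup_{r\in[-T,T]}\|K(r)+S(R,r)\|\le 2|\partial X|\,\|\Psi\|_\xi\,\|F\|\,\zeta(\rho).$$
   Context: Setting. $\Gamma$ is a countable set with a graph distance $d(x,y)\ge 0$ (integer-valued). $F:[0,\infty)\to(0,\infty)$ satisfies $\|F\|:=\sup_{x\in\Gamma}\sum_{y\in\Gamma}F(d(x,y))<\infty$ and $C_F:=\sup_{x,z}\sum_{y}\frac{F(d(x,y))F(d(y,z))}{F(d(x,z))}<\infty$. $\xi:[0,\infty)\to(0,\infty)$ is non-increasing, satisfies $\xi(a+b)\ge\xi(a)\xi(b)$, and $\lim_{r\to\infty}\xi(r)r^n=0$ for all $n\in\mathbb N$. Put $F_\xi(r):=F(r)\xi(r)$ and $\zeta(R):=\sum_{r\in\mathbb N,\ r\ge R+1}\xi(r)$ for $R\in\mathbb N\cup\{0\}$. Each $x\in\Gamma$ carries a finite-dimensional Hilbert space $\mathcal H_x$; for finite $\Lambda$, $\mathcal A_\Lambda=\mathcal B(\bigotimes_{x\in\Lambda}\mathcal H_x)$, embedded in $\mathcal A_{\Lambda'}$ for $\Lambda\subset\Lambda'$.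 Fix $T>0$. An interaction assigns to each finite $Z\subset\Gamma$ and $t\in[-T,T]$ a self-adjoint $\Psi(Z,t)\in\mathcal A_Z$, continuous in $t$, with $\|\Psi\|_\xi:=\sup_{x,y\in\Gamma}\frac{1}{F_\xi(d(x,y))}\sum_{Z\ni x,y}\sup_{t\in[-T,T]}\|\Psi(Z,t)\|<\infty$. Sets. For finite $X$: $\partial X:=\{x\in X: d(x,\Gamma\setminus X)=1\}$; for $R\in\mathbb N\cup\{0\}$, $\overline X^R:=\{x\in\Gamma:d(x,X)\le R\}$, $\underline X_R:=\{x\in\Gamma: d(x,\Gamma\setminus X)\le R\}$, $\partial_RX:=\overline X^R\cap\underline X_R$. Surface energy. For $R\in\mathbb N$, $\rho=\lfloor R/2\rfloor$, finite $\Lambda\supset\overline X^R$: $M_R:=\{Y\subset\partial_{\rho}X: Y\cap X\ne\emptyset,\ Y\cap(\Lambda\setminus X)\ne\emptyset\}$ and $S(R,t):=\sum_{Z\in M_R}\Psi(Z,t)$. *)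

(* Defs.v *)
From Stdlib Require Import Reals Lra Lia List ClassicalEpsilon.
Open Scope R_scope.

(* ---------- abstract normed abelian group (model for the quasi-local algebra) ---------- *)
Record NormedAbGroup := {
  ng_car :> Type;
  ng_zero : ng_car;
  ng_add : ng_car -> ng_car -> ng_car;
  ng_opp : ng_car -> ng_car;
  ng_norm : ng_car -> R;
  ng_addA : forall a b c, ng_add a (ng_add b c) = ng_add (ng_add a b) c;
  ng_addC : forall a b, ng_add a b = ng_add b a;
  ng_add0 : forall a, ng_add ng_zero a = a;
  ng_addN : forall a, ng_add (ng_opp a) a = ng_zero;
  ng_norm_ge0 : forall a, 0 <= ng_norm a;
  ng_norm_eq0 : forall a, ng_norm a = 0 -> a = ng_zero;
  ng_norm_tri : forall a b, ng_norm (ng_add a b) <= ng_norm a + ng_norm b;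
  ng_normN : forall a, ng_norm (ng_opp a) = ng_norm a
}.

Definition ng_sum (A : NormedAbGroup) (l : list A) : A :=
  fold_right (ng_add A) (ng_zero A) l.

Definition Rsum (l : list R) : R := fold_right Rplus 0 l.

Inductive walk {G : Type} (E : G -> G -> Prop) : G -> G -> nat -> Prop :=
| walk0 : forall x, walk E x x 0
| walkS : forall x y z n, E x y -> walk E y z n -> walk E x z (S n).

Definition is_graph_distance {G : Type} (E : G -> G -> Prop) (d : G -> G -> nat) : Prop :=
  (forall x y, E x y -> E y x) /\ (forall x, ~ E x x) /\
  (forall x y, walk E x y (d x y) /\ (forall n, walk E x y n -> (d x y <= n)%nat)).

Definition countable (G : Type) : Prop :=
  exists f : G -> nat, forall x y, f x = f y -> x = y.

Definition pred_of {G : Type} (l : list G) : G -> Prop := fun x => In x l.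

Definition has_card {G : Type} (S : G -> Prop) (n : nat) : Prop :=
  exists l, NoDup l /\ (forall x, In x l <-> S x) /\ length l = n.

Definition dist_le {G : Type} (d : G -> G -> nat) (x : G) (S : G -> Prop) (n : nat) : Prop :=
  exists y, S y /\ (d x y <= n)%nat.

Definition compl {G : Type} (X : G -> Prop) : G -> Prop := fun x => ~ X x.

Definition bdry {G : Type} (d : G -> G -> nat) (X : G -> Prop) : G -> Prop :=
  fun x => X x /\ dist_le d x (compl X) 1 /\ ~ dist_le d x (compl X) 0.

Definition outer {G : Type} (d : G -> G -> nat) (X : G -> Prop) (R : nat) : G -> Prop :=
  fun x => dist_le d x X R.

Definition inner {G : Type} (d : G -> G -> nat) (X : G -> Prop) (R : nat) : G -> Prop :=
  fun x => dist_le d x (compl X) R.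

Definition bdryR {G : Type} (d : G -> G -> nat) (X : G -> Prop) (R : nat) : G -> Prop :=
  fun x => outer d X R x /\ inner d X R x.

(* \underline X_n \ \underline X_{n-1}  (used for n >= 1) *)
Definition layer {G : Type} (d : G -> G -> nat) (X : G -> Prop) (n : nat) : G -> Prop :=
  fun x => inner d X n x /\ ~ inner d X (n - 1) x.

Fixpoint sublists {G : Type} (l : list G) : list (list G) :=
  match l with
  | nil => nil :: nil
  | a :: l' => sublists l' ++ map (cons a) (sublists l')
  end.

Definition decP (P : Prop) : bool :=
  if excluded_middle_informative P then true else false.

Definition sum_subsets (A : NormedAbGroup) {G : Type} (lam : list G)
  (P : (G -> Prop) -> Prop) (f : (G -> Prop) -> A) : A :=
  ng_sum A (map (fun s => f (pred_of s))
                (filter (fun s => decP (P (pred_of s))) (sublists lam))).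

(* partial sums  sum_{y in l} F(d(x,y)),  whose sup is ||F|| *)
Definition F_sums {G : Type} (d : G -> G -> nat) (F : R -> R) : R -> Prop :=
  fun s => exists x (l : list G), NoDup l /\ s = Rsum (map (fun y => F (INR (d x y))) l).

Definition CF_sums {G : Type} (d : G -> G -> nat) (F : R -> R) : R -> Prop :=
  fun s => exists x z (l : list G), NoDup l /\
    s = Rsum (map (fun y => F (INR (d x y)) * F (INR (d y z)) / F (INR (d x z))) l).

Definition Psi_vals (A : NormedAbGroup) {G : Type} (T : R) (Psi : (G -> Prop) -> R -> A)
  (Z : G -> Prop) : R -> Prop :=
  fun s => exists t, -T <= t <= T /\ s = ng_norm A (Psi Z t).

(* partial sums  (1/F_xi(d(x,y))) sum_{Z in L} sup_t ||Psi(Z,t)||  over finite families L of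
   distinct finite sets Z containing x and y; psisup Z = sup_t ||Psi(Z,t)|| *)
Definition Psi_sums {G : Type} (d : G -> G -> nat) (F xi : R -> R) (psisup : (G -> Prop) -> R)
  : R -> Prop :=
  fun s => exists x y (L : list (list G)),
    NoDup (map pred_of L) /\ (forall l, In l L -> In x l /\ In y l) /\
    s = Rsum (map (fun l => psisup (pred_of l)) L) / (F (INR (d x y)) * xi (INR (d x y))).

(* Main.v *)
Require Import Defs.
From Stdlib Require Import Reals List Lra Lia ClassicalEpsilon Classical Bool FinFun.
Open Scope R_scope.


Definition indic (P : Prop) (x : R) : R :=
  if excluded_middle_informative P then x else 0.
Definition Rs {B : Type} (l : list B) (f : B -> R) : R := Rsum (map f l).

Lemma indic_T (P : Prop) x : P -> indic P x = x.
Proof. intro H; unfold indic; destruct excluded_middle_informative; tauto. Qed.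
Lemma indic_F (P : Prop) x : ~P -> indic P x = 0.
Proof. intro H; unfold indic; destruct excluded_middle_informative; tauto. Qed.
Lemma indic_ge0 P x : 0 <= x -> 0 <= indic P x.
Proof. unfold indic; destruct excluded_middle_informative; lra. Qed.
Lemma indic_le P x y : x <= y -> 0 <= y -> indic P x <= indic P y.
Proof. unfold indic; destruct excluded_middle_informative; lra. Qed.
Lemma indic_mult P c : indic P c = c * indic P 1.
Proof. unfold indic; destruct excluded_middle_informative; lra. Qed.
Lemma indic_or P Q y : 0 <= y -> indic (P \/ Q) y <= indic P y + indic Q y.
Proof. intro. unfold indic; repeat destruct excluded_middle_informative; tauto || lra. Qed.

Lemma decP_iff P : decP P = true <-> P.
Proof. unfold decP; destruct excluded_middle_informative; split; intros; auto; discriminate. Qed.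

Lemma Rs_nil {B} (f : B -> R) : Rs nil f = 0.
Proof. reflexivity. Qed.
Lemma Rs_cons {B} (a : B) l f : Rs (a :: l) f = f a + Rs l f.
Proof. reflexivity. Qed.

Lemma Rs_le {B} (l : list B) f g : (forall x, In x l -> f x <= g x) -> Rs l f <= Rs l g.
Proof.
  induction l; intros H; rewrite ?Rs_nil, ?Rs_cons; [lra|].
  assert (f a <= g a) by (apply H; simpl; auto).
  assert (Rs l f <= Rs l g) by (apply IHl; intros; apply H; simpl; auto). lra.
Qed.
Lemma Rs_ge0 {B} (l : list B) f : (forall x, In x l -> 0 <= f x) -> 0 <= Rs l f.
Proof.
  induction l; intros H; rewrite ?Rs_nil, ?Rs_cons; [lra|].
  assert (0 <= f a) by (apply H; simpl; auto).
  assert (0 <= Rs l f) by (apply IHl; intros; apply H; simpl; auto). lra.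
Qed.
Lemma Rs_In {B} (l : list B) f x : (forall y, In y l -> 0 <= f y) -> In x l -> f x <= Rs l f.
Proof.
  induction l; intros H Hx; simpl in Hx; [contradiction|]. rewrite Rs_cons.
  assert (0 <= f a) by (apply H; simpl; auto).
  assert (0 <= Rs l f) by (apply Rs_ge0; intros; apply H; simpl; auto).
  destruct Hx as [<-|Hx]; [lra|].
  assert (f x <= Rs l f) by (apply IHl; auto; intros; apply H; simpl; auto). lra.
Qed.
Lemma Rs_ext {B} (l : list B) f g : (forall x, In x l -> f x = g x) -> Rs l f = Rs l g.
Proof. intro H. apply Rle_antisym; apply Rs_le; intros; rewrite H; auto; lra. Qed.
Lemma Rs_plus {B} (l : list B) f g : Rs l (fun x => f x + g x) = Rs l f + Rs l g.
Proof. induction l; rewrite ?Rs_nil, ?Rs_cons; [lra|]. rewrite IHl; lra. Qed.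
Lemma Rs_scal {B} (l : list B) c f : Rs l (fun x => c * f x) = c * Rs l f.
Proof. induction l; rewrite ?Rs_nil, ?Rs_cons; [lra|]. rewrite IHl; lra. Qed.
Lemma Rs_ind {B} (l : list B) P f : Rs l (fun x => indic P (f x)) = indic P (Rs l f).
Proof. unfold indic; destruct excluded_middle_informative; [reflexivity|].
  induction l; rewrite ?Rs_nil, ?Rs_cons; [lra|]. rewrite IHl; lra. Qed.
Lemma Rs_swap {B C} (l1 : list B) (l2 : list C) f :
  Rs l1 (fun a => Rs l2 (fun b => f a b)) = Rs l2 (fun b => Rs l1 (fun a => f a b)).
Proof.
  induction l1; rewrite ?Rs_nil, ?Rs_cons.
  - unfold Rs; simpl. induction l2; simpl; [lra|]. rewrite <- IHl2; lra.
  - rewrite IHl1. rewrite <- Rs_plus. reflexivity.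
Qed.
Lemma Rs_filter {B} (l : list B) (p : B -> bool) f :
  Rs (filter p l) f = Rs l (fun x => if p x then f x else 0).
Proof. induction l; [reflexivity|]. rewrite Rs_cons. simpl filter. destruct (p a); rewrite ?Rs_cons, IHl; lra. Qed.
Lemma Rs_filter_ind {B} (l : list B) (P : B -> Prop) f :
  Rs (filter (fun x => decP (P x)) l) f = Rs l (fun x => indic (P x) (f x)).
Proof. rewrite Rs_filter. apply Rs_ext. intros. unfold decP, indic.
  destruct excluded_middle_informative; reflexivity. Qed.
Lemma Rs_count {B} (l : list B) (P : B -> Prop) :
  Rs l (fun x => indic (P x) 1) = INR (length (filter (fun x => decP (P x)) l)).
Proof. induction l; [reflexivity|]. rewrite Rs_cons, IHl. unfold indic, decP. simpl filter.
  destruct excluded_middle_informative; [|lra]. simpl length. rewrite S_INR; lra. Qed.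
Lemma Rsum_seq (f : nat -> R) M : Rs (seq 0 (S M)) f = sum_f_R0 f M.
Proof. induction M. - unfold Rs; simpl; lra.
  - rewrite seq_S. unfold Rs in *. rewrite map_app. simpl sum_f_R0. rewrite <- IHM.
    generalize (map f (seq 0 (S M))). clear. intro l. induction l; simpl; [lra|]. simpl in IHl. rewrite IHl; lra. Qed.

Lemma ng_addr0 (A : NormedAbGroup) (a : A) : ng_add A a (ng_zero A) = a.
Proof. rewrite ng_addC; apply ng_add0. Qed.
Lemma ng_opp_unique (A : NormedAbGroup) (x y : A) : ng_add A x y = ng_zero A -> x = ng_opp A y.
Proof. intro H.
  rewrite <- (ng_addr0 A x), <- (ng_addN A y), (ng_addC A (ng_opp A y) y), ng_addA, H, ng_add0.
  reflexivity. Qed.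
Lemma ng_opp_add (A : NormedAbGroup) (a b : A) :
  ng_opp A (ng_add A a b) = ng_add A (ng_opp A a) (ng_opp A b).
Proof. symmetry. apply ng_opp_unique.
  rewrite <- ng_addA, (ng_addA A (ng_opp A b) a b), (ng_addC A (ng_opp A b) a), <- ng_addA,
    ng_addN, ng_addr0, ng_addN. reflexivity. Qed.
Lemma KS_eq (A : NormedAbGroup) (a b : A) :
  ng_add A (ng_opp A (ng_add A a b)) a = ng_opp A b.
Proof. rewrite ng_opp_add, (ng_addC A (ng_opp A a)), <- ng_addA, ng_addN, ng_addr0. reflexivity. Qed.

Lemma ng_sum_split (A : NormedAbGroup) {B} (h : B -> A) (p q : B -> bool) l :
  ng_sum A (map h (filter p l)) =
  ng_add A (ng_sum A (map h (filter (fun x => p x && q x) l)))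
           (ng_sum A (map h (filter (fun x => p x && negb (q x)) l))).
Proof.
  induction l; simpl. - rewrite ng_add0; reflexivity.
  - destruct (p a), (q a); simpl; rewrite IHl; unfold ng_sum; simpl; fold (ng_sum A).
    + rewrite ng_addA; reflexivity.
    + rewrite !ng_addA, (ng_addC A (h a)). reflexivity.
    + reflexivity.
    + reflexivity.
Qed.

Lemma ng_norm_sum (A : NormedAbGroup) {B} (h : B -> A) l :
  ng_norm A (ng_zero A) = 0 ->
  ng_norm A (ng_sum A (map h l)) <= Rs l (fun x => ng_norm A (h x)).
Proof.
  intro H0. induction l; simpl.
  - unfold Rs; simpl. rewrite H0; lra.
  - rewrite Rs_cons. unfold ng_sum; simpl; fold (ng_sum A).
    eapply Rle_trans; [apply ng_norm_tri|]. apply Rplus_le_compat_l. exact IHl.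
Qed.

Lemma sublists_incl {G : Type} (l : list G) s : In s (sublists l) -> incl s l.
Proof.
  revert s; induction l; simpl; intros s H.
  - destruct H as [<-|[]]. intros x [].
  - apply in_app_or in H. destruct H as [H|H].
    + intros x Hx. right. apply (IHl s H x Hx).
    + apply in_map_iff in H. destruct H as [t [<- Ht]].
      intros x [<-|Hx]; [left; auto| right; apply (IHl t Ht x Hx)].
Qed.

Lemma sublists_uniq {G : Type} (l : list G) : NoDup l ->
  forall s1 s2, In s1 (sublists l) -> In s2 (sublists l) ->
  (forall x, In x s1 <-> In x s2) -> s1 = s2.
Proof.
  induction l as [|a l IH]; simpl; intros Hnd s1 s2 H1 H2 Hx.
  - destruct H1 as [<-|[]]; destruct H2 as [<-|[]]; auto.
  - inversion Hnd as [|? ? Hna Hnd']; subst.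
    apply in_app_or in H1; apply in_app_or in H2.
    destruct H1 as [H1|H1]; destruct H2 as [H2|H2].
    + apply IH; auto.
    + apply in_map_iff in H2. destruct H2 as [t [<- Ht]].
      exfalso. apply Hna. apply (sublists_incl l s1 H1). apply Hx. left; auto.
    + apply in_map_iff in H1. destruct H1 as [t [<- Ht]].
      exfalso. apply Hna. apply (sublists_incl l s2 H2). apply Hx. left; auto.
    + apply in_map_iff in H1. destruct H1 as [t1 [<- Ht1]].
      apply in_map_iff in H2. destruct H2 as [t2 [<- Ht2]].
      f_equal. apply IH; auto. intro x. split; intro Hin.
      * assert (x <> a) by (intro; subst; apply Hna; apply (sublists_incl l t1 Ht1); auto).
        destruct (proj1 (Hx x) (or_intror Hin)); [congruence|auto].
      * assert (x <> a) by (intro; subst; apply Hna; apply (sublists_incl l t2 Ht2); auto).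
        destruct (proj2 (Hx x) (or_intror Hin)); [congruence|auto].
Qed.

Lemma sublists_NoDup {G : Type} (l : list G) : NoDup l -> NoDup (sublists l).
Proof.
  induction l as [|a l IH]; simpl; intro Hnd.
  - constructor; [intros []|constructor].
  - inversion Hnd as [|? ? Hna Hnd']; subst.
    apply NoDup_app.
    + auto.
    + apply Injective_map_NoDup; [intros x y H; inversion H; auto|auto].
    + intros s H1 H2. apply in_map_iff in H2. destruct H2 as [t [<- Ht]].
      apply Hna. apply (sublists_incl l _ H1). left; auto.
Qed.

Lemma sublists_pred_NoDup {G : Type} (l : list G) (q : list G -> bool) : NoDup l ->
  NoDup (map pred_of (filter q (sublists l))).
Proof.
  intro Hnd. apply NoDup_map_NoDup_ForallPairs.
  - intros s1 s2 H1 H2 Heq. apply filter_In in H1. apply filter_In in H2.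
    apply (sublists_uniq l Hnd); tauto || idtac.
    intro x. unfold pred_of in Heq. split; intro Hx.
    + change ((fun y => In y s2) x). rewrite <- Heq. exact Hx.
    + change ((fun y => In y s1) x). rewrite Heq. exact Hx.
  - apply NoDup_filter. apply sublists_NoDup; auto.
Qed.

Lemma walk_app {G} (E : G -> G -> Prop) x y z a b :
  walk E x y a -> walk E y z b -> walk E x z (a + b).
Proof. induction 1; intros; simpl; auto. econstructor; eauto. Qed.

Lemma walk_rev {G} (E : G -> G -> Prop) (Hs : forall x y, E x y -> E y x) x y n :
  walk E x y n -> walk E y x n.
Proof. induction 1. constructor.
  replace (S n) with (n + 1)%nat by lia. eapply walk_app; eauto.
  econstructor; [apply Hs; eauto| constructor]. Qed.

Lemma walk_split {G} (E : G -> G -> Prop) a : forall b x z,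
  walk E x z (a + b) -> exists y, walk E x y a /\ walk E y z b.
Proof. induction a; simpl; intros b x z H.
  - exists x; split; [constructor|auto].
  - inversion H; subst. destruct (IHa b y z H4) as [w [H5 H6]]. exists w; split; auto.
    econstructor; eauto. Qed.


Lemma d_le {G} E (d : G -> G -> nat) (Hd : is_graph_distance E d) x y n :
  walk E x y n -> (d x y <= n)%nat.
Proof. intro H. destruct Hd as (_ & _ & Hd). apply (proj2 (Hd x y)); auto. Qed.
Lemma d_walk {G} E (d : G -> G -> nat) (Hd : is_graph_distance E d) x y : walk E x y (d x y).
Proof. destruct Hd as (_ & _ & Hd). apply Hd. Qed.
Lemma d_refl {G} E (d : G -> G -> nat) (Hd : is_graph_distance E d) x : d x x = 0%nat.
Proof. assert (H := d_le E d Hd x x 0 (walk0 E x)). lia. Qed.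
Lemma d_eq0 {G} E (d : G -> G -> nat) (Hd : is_graph_distance E d) x y : d x y = 0%nat -> x = y.
Proof. intro H. assert (W := d_walk E d Hd x y). rewrite H in W. inversion W; auto. Qed.
Lemma d_sym {G} E (d : G -> G -> nat) (Hd : is_graph_distance E d) x y : d x y = d y x.
Proof.
  assert (Hs : forall x y, E x y -> E y x) by apply Hd.
  assert (H1 := d_le E d Hd y x _ (walk_rev E Hs _ _ _ (d_walk E d Hd x y))).
  assert (H2 := d_le E d Hd x y _ (walk_rev E Hs _ _ _ (d_walk E d Hd y x))). lia.
Qed.

Lemma least_nat (P : nat -> Prop) : (exists n, P n) -> exists m, P m /\ forall n, P n -> (m <= n)%nat.
Proof.
  intros [n Hn]. apply NNPP; intro Hno.
  assert (forall k, forall j, (j <= k)%nat -> ~ P j).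
  { induction k; intros j Hj Pj.
    - apply Hno. exists j. split; auto. intros; lia.
    - apply Hno. exists j. split; auto. intros n' Pn'.
      destruct (Nat.le_gt_cases j n'); auto. exfalso. apply (IHk n'); auto. lia. }
  apply (H n n); auto.
Qed.

Lemma depth {G} E (d : G -> G -> nat) (Hd : is_graph_distance E d) (X : G -> Prop) a b :
  X a -> ~ X b -> exists m, (1 <= m)%nat /\ (m <= d a b)%nat /\ layer d X m a /\
     forall n, inner d X n a -> (m <= n)%nat.
Proof.
  intros Xa Xb. destruct (least_nat (fun n => inner d X n a)) as [m [Hm Hmin]].
  { exists (d a b). exists b. split; auto. }
  assert (m <> 0%nat).
  { intro; subst. destruct Hm as [y [Hy Hy0]]. assert (d a y = 0%nat) by lia.
    apply (d_eq0 E d Hd) in H. subst. contradiction. }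
  exists m. split; [lia|]. split.
  { apply Hmin. exists b; split; auto. }
  split; auto. split; auto. intro Hi. apply Hmin in Hi. lia.
Qed.

Lemma type2_dist {G} E (d : G -> G -> nat) (Hd : is_graph_distance E d) (X : G -> Prop) rho a w m :
  X a -> ~ X w -> ~ outer d X rho w -> (forall n, inner d X n a -> (m <= n)%nat) ->
  (m + rho <= d a w)%nat.
Proof.
  intros Xa Xw Hout Hmin.
  destruct (Nat.le_gt_cases (d a w) rho) as [Hle|Hlt].
  { exfalso. apply Hout. exists a. split; auto. rewrite (d_sym E d Hd). auto. }
  assert (W := d_walk E d Hd a w).
  replace (d a w) with ((d a w - rho) + rho)%nat in W by lia.
  destruct (walk_split E _ _ _ _ W) as [p [W1 W2]].
  destruct (classic (X p)) as [Xp|Xp].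
  { exfalso. apply Hout. exists p. split; auto. rewrite (d_sym E d Hd). apply (d_le E d Hd _ _ _ W2). }
  assert (inner d X (d a w - rho) a). { exists p. split; auto. apply (d_le E d Hd _ _ _ W1). }
  apply Hmin in H. lia.
Qed.

Lemma per_a {G} (lamL : list G) (Tp : G -> Prop) (Q : nat -> Prop) (D : G -> nat) (F xi : R -> R)
  normF normPsi M rho :
  0 <= normPsi -> (forall r, 0 <= r -> 0 < F r) -> (forall r, 0 <= r -> 0 < xi r) ->
  (forall a b, 0 <= a -> a <= b -> xi b <= xi a) ->
  Rs lamL (fun b => F (INR (D b))) <= normF ->
  (forall b, In b lamL -> Tp b -> exists k, (k < M)%nat /\ Q k /\
       forall b', In b' lamL -> Tp b' -> (k + rho + 1 <= D b')%nat) ->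
  Rs lamL (fun b => indic (Tp b) (normPsi * (F (INR (D b)) * xi (INR (D b)))))
   <= normPsi * normF * Rs (seq 0 M) (fun k => indic (Q k) (xi (INR (k + rho + 1)))).
Proof.
  intros HP HF Hxi Hmon HnF Hk.
  assert (HFs : 0 <= Rs lamL (fun b => F (INR (D b)))).
  { apply Rs_ge0. intros. left. apply HF, pos_INR. }
  assert (HR : 0 <= Rs (seq 0 M) (fun k => indic (Q k) (xi (INR (k + rho + 1))))).
  { apply Rs_ge0. intros. apply indic_ge0. left. apply Hxi, pos_INR. }
  destruct (classic (exists b, In b lamL /\ Tp b)) as [[b [Hb Tb]]|Hno].
  - destruct (Hk b Hb Tb) as [k [HkM [Qk Hd]]].
    set (c := xi (INR (k + rho + 1))).
    assert (Hc : 0 < c) by (apply Hxi, pos_INR).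
    apply Rle_trans with (Rs lamL (fun b => (normPsi * c) * F (INR (D b)))).
    { apply Rs_le. intros b' Hb'. destruct (classic (Tp b')) as [Tb'|Tb'].
      - rewrite indic_T; auto. assert (Hdd := Hd b' Hb' Tb').
        assert (xi (INR (D b')) <= c). { apply Hmon. apply pos_INR. apply le_INR; auto. }
        assert (0 < F (INR (D b'))) by (apply HF, pos_INR).
        assert (0 < xi (INR (D b'))) by (apply Hxi, pos_INR).
        assert (F (INR (D b')) * xi (INR (D b')) <= F (INR (D b')) * c)
          by (apply Rmult_le_compat_l; lra).
        assert (normPsi * (F (INR (D b')) * xi (INR (D b'))) <= normPsi * (F (INR (D b')) * c))
          by (apply Rmult_le_compat_l; lra).
        lra.
      - rewrite indic_F; auto. assert (0 < F (INR (D b'))) by (apply HF, pos_INR).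
        apply Rmult_le_pos; [apply Rmult_le_pos|]; lra. }
    rewrite Rs_scal.
    assert (Hin : indic (Q k) c <= Rs (seq 0 M) (fun k => indic (Q k) (xi (INR (k + rho + 1))))).
    { apply (Rs_In (seq 0 M) (fun k => indic (Q k) (xi (INR (k + rho + 1)))) k).
      intros. apply indic_ge0. left. apply Hxi, pos_INR. apply in_seq. lia. }
    rewrite indic_T in Hin; auto.
    assert (normPsi * c * Rs lamL (fun b => F (INR (D b))) <= normPsi * c * normF)
      by (apply Rmult_le_compat_l; [apply Rmult_le_pos|]; lra).
    assert (normPsi * normF * c <= normPsi * normF * Rs (seq 0 M) (fun k => indic (Q k) (xi (INR (k + rho + 1)))))
      by (apply Rmult_le_compat_l; [apply Rmult_le_pos|]; lra).
    lra.
  - apply Rle_trans with 0.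
    + apply Rle_trans with (Rs lamL (fun _ => 0)).
      * apply Rs_le. intros. rewrite indic_F; [lra|]. intro; apply Hno; eauto.
      * clear. induction lamL; [unfold Rs; simpl; lra|]. rewrite Rs_cons; lra.
    + apply Rmult_le_pos; [apply Rmult_le_pos|]; lra.
Qed.

Lemma layer_X {G} E (d : G -> G -> nat) (Hd : is_graph_distance E d) (X : G -> Prop) n x :
  (1 <= n)%nat -> layer d X n x -> X x.
Proof. intros Hn [_ Hl]. apply NNPP; intro Hx. apply Hl. exists x. split; auto.
  rewrite (d_refl E d Hd). lia. Qed.

Lemma has_card_unique {G} (S : G -> Prop) a b : has_card S a -> has_card S b -> a = b.
Proof. intros [l1 [N1 [H1 L1]]] [l2 [N2 [H2 L2]]].
  assert (length l1 <= length l2)%nat by (apply NoDup_incl_length; auto; intros x Hx; apply H2, H1, Hx).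
  assert (length l2 <= length l1)%nat by (apply NoDup_incl_length; auto; intros x Hx; apply H1, H2, Hx).
  lia. Qed.

Lemma layer_has_card {G} E (d : G -> G -> nat) (Hd : is_graph_distance E d) (X : G -> Prop)
  (lamL : list G) n : NoDup lamL -> (forall x, X x -> In x lamL) -> (1 <= n)%nat ->
  has_card (layer d X n) (length (filter (fun x => decP (layer d X n x)) lamL)).
Proof. intros Hnd HX Hn. unfold has_card. exists (filter (fun x => decP (layer d X n x)) lamL). split; [apply NoDup_filter; auto|]. split; [|reflexivity].
  intro x. rewrite filter_In, decP_iff. split; [tauto|]. intro H; split; auto.
  apply HX. apply (layer_X E d Hd X n x Hn H). Qed.

Lemma layer_count_le {G} E (d : G -> G -> nat) (Hd : is_graph_distance E d) (X : G -> Prop)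
  (lamL : list G) cardBX :
  NoDup lamL -> (forall x, X x -> In x lamL) ->
  (forall (n a b : nat), (1 <= n)%nat -> has_card (layer d X (S n)) a ->
              has_card (layer d X n) b -> (a <= b)%nat) ->
  has_card (bdry d X) cardBX ->
  forall n, (1 <= n)%nat -> (length (filter (fun x => decP (layer d X n x)) lamL) <= cardBX)%nat.
Proof.
  intros Hnd HX Hlay Hb n Hn. induction n as [|n IH]; [lia|].
  destruct n as [|n].
  - assert (has_card (bdry d X) (length (filter (fun x => decP (layer d X 1 x)) lamL))).
    { destruct (layer_has_card E d Hd X lamL 1 Hnd HX (le_n 1)) as [l [N [Hl L]]].
      exists l. split; auto. split; auto. intro x. rewrite Hl. unfold layer, bdry, inner; simpl.
      split.
      - intros [H1 H2]. split; [apply (layer_X E d Hd X 1 x (le_n 1)); split; auto|]. split; auto.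
      - intros [H1 [H2 H3]]. split; auto. }
    rewrite (has_card_unique _ _ _ H Hb). lia.
  - eapply Nat.le_trans; [|apply IH; lia].
    apply (Hlay (S n)); [lia| |]; apply (layer_has_card E d Hd X lamL); auto; lia.
Qed.

Lemma layer_Rs_le {G} E (d : G -> G -> nat) (Hd : is_graph_distance E d) (X : G -> Prop)
  (lamL : list G) cardBX :
  NoDup lamL -> (forall x, X x -> In x lamL) ->
  (forall (n a b : nat), (1 <= n)%nat -> has_card (layer d X (S n)) a ->
              has_card (layer d X n) b -> (a <= b)%nat) ->
  has_card (bdry d X) cardBX ->
  forall n c, (1 <= n)%nat -> 0 <= c -> Rs lamL (fun x => indic (layer d X n x) c) <= c * INR cardBX.
Proof.
  intros. rewrite (Rs_ext lamL _ (fun x => c * indic (layer d X n x) 1)) by (intros; apply indic_mult).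
  rewrite Rs_scal, Rs_count. apply Rmult_le_compat_l; auto. apply le_INR.
  eapply layer_count_le; eauto.
Qed.

Theorem mainTheorem2
  (* the lattice Gamma with graph distance d *)
  (G : Type) (Gcount : countable G) (E : G -> G -> Prop) (d : G -> G -> nat)
  (Hd : is_graph_distance E d)
  (* F *)
  (F : R -> R) (HFpos : forall r, 0 <= r -> 0 < F r)
  (normF : R) (HnormF : is_lub (F_sums d F) normF)
  (HCF : bound (CF_sums d F))
  (* xi *)
  (xi : R -> R) (Hxipos : forall r, 0 <= r -> 0 < xi r)
  (Hximon : forall a b, 0 <= a -> a <= b -> xi b <= xi a)
  (Hximul : forall a b, 0 <= a -> 0 <= b -> xi a * xi b <= xi (a + b))
  (Hxidec : forall (n : nat) (eps : R), 0 < eps ->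
             exists M, forall r, M <= r -> Rabs (xi r * r ^ n) < eps)
  (* the interaction Psi, valued in the (abstract) normed algebra A *)
  (T : R) (HT : 0 < T) (A : NormedAbGroup) (Psi : (G -> Prop) -> R -> A)
  (Hcont : forall (l : list G) (t : R), -T <= t <= T ->
             forall eps, 0 < eps -> exists delta, 0 < delta /\
               forall s, -T <= s <= T -> Rabs (s - t) < delta ->
                 ng_norm A (ng_add A (Psi (pred_of l) s) (ng_opp A (Psi (pred_of l) t))) < eps)
  (psisup : (G -> Prop) -> R)
  (Hpsisup : forall l : list G, is_lub (Psi_vals A T Psi (pred_of l)) (psisup (pred_of l)))
  (normPsi : R) (HnormPsi : is_lub (Psi_sums d F xi psisup) normPsi)
  (* the finite set X with non-increasing layer sizes *)
  (xL : list G)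
  (Hlayer : forall (n a b : nat), (1 <= n)%nat ->
              has_card (layer d (pred_of xL) (S n)) a ->
              has_card (layer d (pred_of xL) n) b -> (a <= b)%nat)
  (* R, rho, Lambda *)
  (Rn : nat) (HR : (1 <= Rn)%nat)
  (lamL : list G) (HlamND : NoDup lamL)
  (Hlam : forall x, outer d (pred_of xL) Rn x -> In x lamL)
  (* zeta(rho) and |partial X| *)
  (zeta_rho : R)
  (Hzeta : infinite_sum (fun k => xi (INR (k + Nat.div2 Rn + 1))) zeta_rho)
  (cardBX : nat) (HcardBX : has_card (bdry d (pred_of xL)) cardBX) :
  let X := pred_of xL in
  let Lam := pred_of lamL in
  let rho := Nat.div2 Rn in
  let crossing := fun Z : G -> Prop =>
        (exists x, Z x /\ X x) /\ (exists x, Z x /\ Lam x /\ ~ X x) in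
  let K := fun t => ng_opp A (sum_subsets A lamL crossing (fun Z => Psi Z t)) in
  let Ssurf := fun t => sum_subsets A lamL
        (fun Y => (forall x, Y x -> bdryR d X rho x) /\ crossing Y) (fun Z => Psi Z t) in
  forall r, -T <= r <= T ->
    ng_norm A (ng_add A (K r) (Ssurf r))
      <= 2 * INR cardBX * normPsi * normF * zeta_rho.
Proof.
  intros X Lam rho crossing K Ssurf r Hr.
  assert (H0 : ng_norm A (ng_zero A) = 0).
  { apply Rle_antisym; [|apply ng_norm_ge0].
    apply Rnot_lt_le. intro Hpos.
    destruct (Hcont nil 0 ltac:(lra) _ Hpos) as [delta [Hdel Hc]].
    specialize (Hc 0 ltac:(lra) ltac:(rewrite Rminus_0_r, Rabs_R0; lra)).
    rewrite ng_addC, ng_addN in Hc. lra. }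
  assert (Ginh : exists x : G, True).
  { apply NNPP; intro Hn. destruct HnormF as [_ Hl].
    assert (normF <= normF - 1); [|lra]. apply Hl. intros s [x _]. exfalso; apply Hn; eauto. }
  destruct Ginh as [x0 _].
  assert (HnF : 0 <= normF).
  { apply (proj1 HnormF). exists x0, nil. split; [constructor|reflexivity]. }
  assert (HnP : 0 <= normPsi).
  { apply (proj1 HnormPsi). exists x0, x0, nil. split; [constructor|]. split; [intros _ []|].
    simpl. unfold Rdiv; ring. }
  assert (Xsub : forall x, X x -> In x lamL).
  { intros x Hx. apply Hlam. exists x. split; auto. rewrite (d_refl E d Hd). lia. }
  set (g := fun s : list G => psisup (pred_of s)).
  assert (Hg : forall s, ng_norm A (Psi (pred_of s) r) <= g s).
  { intro s. apply (proj1 (Hpsisup s)). exists r. split; auto. }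
  assert (Hg0 : forall s, 0 <= g s).
  { intro s. eapply Rle_trans; [apply ng_norm_ge0|apply (Hg s)]. }
  assert (FS : forall a, Rs lamL (fun b => F (INR (d a b))) <= normF).
  { intro a. apply (proj1 HnormF). exists a, lamL. split; auto. }
  set (l0 := sublists lamL).
  set (bad := fun s : list G => crossing (pred_of s) /\ ~ (forall x, pred_of s x -> bdryR d X rho x)).
  assert (PB : forall a b, Rs l0 (fun s => indic (bad s /\ In a s /\ In b s) (g s))
                 <= normPsi * (F (INR (d a b)) * xi (INR (d a b)))).
  { intros a b. rewrite <- Rs_filter_ind.
    set (L := filter _ l0).
    assert (Hpos : 0 < F (INR (d a b)) * xi (INR (d a b))).
    { apply Rmult_lt_0_compat; [apply HFpos|apply Hxipos]; apply pos_INR. }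
    assert (Rs L g / (F (INR (d a b)) * xi (INR (d a b))) <= normPsi).
    { apply (proj1 HnormPsi). exists a, b, L. split; [apply sublists_pred_NoDup; auto|]. split.
      - intros l Hl. unfold L in Hl. apply filter_In in Hl. destruct Hl as [_ Hl].
        apply (proj1 (decP_iff _)) in Hl. destruct Hl as (_ & Ha & Hb); auto.
      - reflexivity. }
    apply (Rmult_le_compat_r (F (INR (d a b)) * xi (INR (d a b)))) in H; [|lra].
    unfold Rdiv in H. rewrite Rmult_assoc, Rinv_l in H; lra. }
  assert (SA : ng_norm A (ng_add A (K r) (Ssurf r)) <= Rs l0 (fun s => indic (bad s) (g s))).
  { unfold K, Ssurf, sum_subsets. cbv beta.
    rewrite (ng_sum_split A (fun s => Psi (pred_of s) r) (fun s => decP (crossing (pred_of s)))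
      (fun s => decP (forall x, pred_of s x -> bdryR d X rho x))).
    assert (Hf : filter (fun s => decP ((forall x, pred_of s x -> bdryR d X rho x) /\ crossing (pred_of s))) (sublists lamL)
       = filter (fun s => decP (crossing (pred_of s)) && decP (forall x, pred_of s x -> bdryR d X rho x)) (sublists lamL)).
    { apply filter_ext_in. intros s _. unfold decP.
      repeat destruct excluded_middle_informative; simpl; try reflexivity; tauto. }
    rewrite Hf, KS_eq, ng_normN.
    eapply Rle_trans; [apply ng_norm_sum; auto|]. rewrite Rs_filter. apply Rs_le. intros s Hs.
    unfold indic, decP, bad.
    repeat destruct excluded_middle_informative; simpl; try tauto; try lra; apply Hg. }
  set (T1 := fun a b => X a /\ ~ inner d X rho a /\ ~ X b).
  set (T2 := fun a b => X a /\ ~ X b /\ ~ outer d X rho b).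
  assert (Cls : forall s, In s l0 -> bad s -> exists a b, In a lamL /\ In b lamL /\ In a s /\ In b s /\
                  (T1 a b \/ T2 a b)).
  { intros s Hs [[[u [Hu Xu]] [v [Hv [Lv Xv]]]] Hni].
    assert (Hinc := sublists_incl lamL s Hs).
    apply not_all_ex_not in Hni. destruct Hni as [w Hw].
    apply imply_to_and in Hw. destruct Hw as [Hw Hbw].
    destruct (classic (X w)) as [Xw|Xw].
    - exists w, v. repeat split; auto. left. repeat split; auto.
      intro Hi. apply Hbw. split; auto. exists w. split; auto. rewrite (d_refl E d Hd). lia.
    - exists u, w. repeat split; auto. right. repeat split; auto.
      intro Ho. apply Hbw. split; auto. exists w. split; auto. rewrite (d_refl E d Hd). lia. }
  set (W := fun a b s => indic (T1 a b \/ T2 a b) (indic (bad s /\ In a s /\ In b s) (g s))).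
  assert (W0 : forall a b s, 0 <= W a b s).
  { intros. unfold W. apply indic_ge0, indic_ge0, Hg0. }
  assert (SB : Rs l0 (fun s => indic (bad s) (g s)) <= Rs l0 (fun s => Rs lamL (fun a => Rs lamL (fun b => W a b s)))).
  { apply Rs_le. intros s Hs. destruct (classic (bad s)) as [Hb|Hb].
    - rewrite indic_T; auto. destruct (Cls s Hs Hb) as (a & b & La & Lb & Sa & Sb & Gab).
      apply Rle_trans with (Rs lamL (fun b => W a b s)).
      + apply Rle_trans with (W a b s).
        * unfold W. rewrite !indic_T; auto. lra.
        * apply (Rs_In lamL (fun b => W a b s)); auto.
      + apply (Rs_In lamL (fun a => Rs lamL (fun b => W a b s))); auto.
        intros. apply Rs_ge0; auto.
    - rewrite indic_F; auto. apply Rs_ge0. intros. apply Rs_ge0; auto. }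
  assert (SC : Rs l0 (fun s => Rs lamL (fun a => Rs lamL (fun b => W a b s))) =
     Rs lamL (fun a => Rs lamL (fun b => indic (T1 a b \/ T2 a b) (Rs l0 (fun s => indic (bad s /\ In a s /\ In b s) (g s)))))).
  { rewrite (Rs_swap l0 lamL (fun s a => Rs lamL (fun b => W a b s))).
    apply Rs_ext. intros a _. rewrite (Rs_swap l0 lamL (fun s b => W a b s)).
    apply Rs_ext. intros b _. unfold W. apply Rs_ind. }
  set (Y := fun a b => normPsi * (F (INR (d a b)) * xi (INR (d a b)))).
  assert (Y0 : forall a b, 0 <= Y a b).
  { intros. unfold Y. apply Rmult_le_pos; auto. left. apply Rmult_lt_0_compat;
    [apply HFpos|apply Hxipos]; apply pos_INR. }
  assert (SD : Rs lamL (fun a => Rs lamL (fun b => indic (T1 a b \/ T2 a b) (Rs l0 (fun s => indic (bad s /\ In a s /\ In b s) (g s)))))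
     <= Rs lamL (fun a => Rs lamL (fun b => indic (T1 a b) (Y a b))) + Rs lamL (fun a => Rs lamL (fun b => indic (T2 a b) (Y a b)))).
  { rewrite <- Rs_plus. apply Rs_le. intros a _. rewrite <- Rs_plus. apply Rs_le. intros b _.
    eapply Rle_trans; [apply indic_le; [apply PB|apply Y0]|]. apply indic_or, Y0. }
  set (Dsum := fold_right plus 0%nat (map (fun a => fold_right plus 0%nat (map (fun b => d a b) lamL)) lamL)).
  assert (fr_le : forall (B : Type) (f : B -> nat) l x, In x l -> (f x <= fold_right plus 0%nat (map f l))%nat).
  { intros B f l. induction l; simpl; intros x []; subst; [lia|]. specialize (IHl x H). lia. }
  set (M := S Dsum).
  assert (HM : forall a b, In a lamL -> In b lamL -> (d a b < M)%nat).
  { intros a b Ha Hb. unfold M, Dsum.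
    assert (H1 := fr_le _ (fun b => d a b) lamL b Hb).
    assert (H2 := fr_le _ (fun a => fold_right plus 0%nat (map (fun b => d a b) lamL)) lamL a Ha).
    simpl in H1, H2. lia. }
  set (xk := fun k : nat => xi (INR (k + rho + 1))).
  assert (ST1 : forall a, In a lamL -> Rs lamL (fun b => indic (T1 a b) (Y a b)) <=
     normPsi * normF * Rs (seq 0 M) (fun k => indic (layer d X (k + rho + 1) a) (xk k))).
  { intros a Ha. apply (per_a lamL (T1 a) (fun k => layer d X (k + rho + 1) a) (d a) F xi normF normPsi M rho);
      auto.
    intros b Hb [Xa [Hia Xb]].
    destruct (depth E d Hd X a b Xa Xb) as [m [Hm1 [Hmd [Hlay Hmin]]]].
    assert (Hmr : (rho + 1 <= m)%nat).
    { destruct (Nat.le_gt_cases (rho + 1) m); auto. exfalso. apply Hia.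
      destruct Hlay as [[y [Hy Hdy]] _]. exists y. split; auto. lia. }
    exists (m - rho - 1)%nat. split; [specialize (HM a b Ha Hb); lia|]. split.
    - replace (m - rho - 1 + rho + 1)%nat with m by lia. auto.
    - intros b' Hb' [_ [_ Xb']]. assert (m <= d a b')%nat; [|lia].
      apply Hmin. exists b'. split; auto. }
  assert (ST2 : forall a, In a lamL -> Rs lamL (fun b => indic (T2 a b) (Y a b)) <=
     normPsi * normF * Rs (seq 0 M) (fun k => indic (layer d X (k + 1) a) (xk k))).
  { intros a Ha. apply (per_a lamL (T2 a) (fun k => layer d X (k + 1) a) (d a) F xi normF normPsi M rho);
      auto.
    intros b Hb [Xa [Xb Hob]].
    destruct (depth E d Hd X a b Xa Xb) as [m [Hm1 [Hmd [Hlay Hmin]]]].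
    exists (m - 1)%nat. split; [specialize (HM a b Ha Hb); lia|]. split.
    - replace (m - 1 + 1)%nat with m by lia. auto.
    - intros b' Hb' [_ [Xb' Hob']].
      assert (H := type2_dist E d Hd X rho a b' m Xa Xb' Hob' Hmin). lia. }
  assert (PZ : Rs (seq 0 M) xk <= zeta_rho).
  { unfold M. rewrite Rsum_seq. apply growing_ineq; [|exact Hzeta].
    intro n. simpl. assert (0 < xk (S n)) by (apply Hxipos, pos_INR). lra. }
  assert (LB : forall (c : nat -> nat), (forall k, (1 <= c k)%nat) ->
     Rs lamL (fun a => Rs (seq 0 M) (fun k => indic (layer d X (c k) a) (xk k))) <= INR cardBX * zeta_rho).
  { intros c Hc. rewrite (Rs_swap lamL (seq 0 M) (fun a k => indic (layer d X (c k) a) (xk k))).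
    apply Rle_trans with (Rs (seq 0 M) (fun k => INR cardBX * xk k)).
    - apply Rs_le. intros k _. rewrite Rmult_comm.
      apply (layer_Rs_le E d Hd X lamL cardBX HlamND Xsub Hlayer HcardBX); auto.
      left. apply Hxipos, pos_INR.
    - rewrite Rs_scal. apply Rmult_le_compat_l; auto. apply pos_INR. }
  assert (L1 := LB (fun k => (k + rho + 1)%nat) ltac:(intros; cbv beta; lia)).
  assert (L2 := LB (fun k => (k + 1)%nat) ltac:(intros; cbv beta; lia)).
  cbv beta in L1, L2.
  assert (E1 : Rs lamL (fun a => Rs lamL (fun b => indic (T1 a b) (Y a b))) <= normPsi * normF * (INR cardBX * zeta_rho)).
  { eapply Rle_trans; [apply Rs_le; intros a Ha; apply (ST1 a Ha)|]. rewrite Rs_scal.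
    apply Rmult_le_compat_l; [apply Rmult_le_pos; auto|exact L1]. }
  assert (E2 : Rs lamL (fun a => Rs lamL (fun b => indic (T2 a b) (Y a b))) <= normPsi * normF * (INR cardBX * zeta_rho)).
  { eapply Rle_trans; [apply Rs_le; intros a Ha; apply (ST2 a Ha)|]. rewrite Rs_scal.
    apply Rmult_le_compat_l; [apply Rmult_le_pos; auto|exact L2]. }
  rewrite SC in SB.
  assert (Eq : 2 * INR cardBX * normPsi * normF * zeta_rho =
     normPsi * normF * (INR cardBX * zeta_rho) + normPsi * normF * (INR cardBX * zeta_rho)) by ring.
  rewrite Eq. eapply Rle_trans; [exact SA|]. eapply Rle_trans; [exact SB|].
  eapply Rle_trans; [exact SD|]. apply Rplus_le_compat; assumption.
Qed.
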